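(* Let $u_1,\ldots,u_6\in\mathbb{R}^3$ be arbitrary vectors and define $v_{i+1}=[u_i,u_{i+1}]$ for $i=1,\ldots,6$ (indices mod $6$, so $v_1=[u_6,u_1]$). Let $\Delta_i=(v_i,[v_{i+1},v_{i+2}])$ for $i=1,\ldots,6$ (indices mod $6$). Then $\Delta_1\Delta_3\Delta_5=\Delta_2\Delta_4\Delta_6$.
   Context: $(a,b)$ denotes the dot product and $[a,b]$ the cross product in $\mathbb{R}^3$; $(a,[b,c])=\det(a,b,c)$. *)

(* Defs.v *)
From mathcomp Require Import all_boot all_order all_algebra.
From mathcomp Require Import reals.
Set Implicit Arguments. Unset Strict Implicit. Unset Printing Implicit Defensive.
Import GRing.Theory Num.Theory.
Local Open Scope ring_scope.

Definition dotp (R : realType) (a b : 'rV[R]_3) : R :=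
  \sum_(i < 3) a 0 i * b 0 i.

Definition crossp (R : realType) (a b : 'rV[R]_3) : 'rV[R]_3 :=
  \row_(k < 3)
    (if k == 0 :> nat then a 0 1 * b 0 2 - a 0 2 * b 0 1
     else if k == 1 :> nat then a 0 2 * b 0 0 - a 0 0 * b 0 2
     else a 0 0 * b 0 1 - a 0 1 * b 0 0).

(* Indices mod 6: we use 0-based indices 'I_6, with i -> i+1 mod 6. *)
Definition succ6 (i : 'I_6) : 'I_6 := ordS i.

(* Main.v *)
Require Import Defs.
From mathcomp Require Import all_boot all_order all_algebra.
From mathcomp Require Import reals.
From mathcomp Require Import ring.
Import GRing.Theory.
Local Open Scope ring_scope.

Lemma sum3 (R : realType) (f : 'I_3 -> R) : \sum_(i < 3) f i = f 0 + f 1 + f 2.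
Proof.
rewrite !big_ord_recr big_ord0 /= add0r.
by congr (f _ + f _ + f _); apply/val_inj.
Qed.

Lemma key (R : realType) (a b c d : 'rV[R]_3) :
  dotp (crossp a b) (crossp (crossp b c) (crossp c d)) =
  dotp a (crossp b c) * dotp b (crossp c d).
Proof.
rewrite /dotp !sum3 /crossp !mxE /=.
ring.
Qed.

Lemma predsucc (i : 'I_6) : ord_pred (succ6 i) = i.
Proof. by case: i => [[|[|[|[|[|[|k]]]]]] Hk] //; apply/val_inj. Qed.

Lemma succk (k : nat) : (k < 6)%N -> succ6 (inord k : 'I_6) = inord (k.+1 %% 6).
Proof.
by case: k => [|[|[|[|[|[|k]]]]]] // _; apply/val_inj; rewrite /= !inordK.
Qed.

Theorem mainTheorem5 (R : realType) (u : 'I_6 -> 'rV[R]_3) :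
  let v : 'I_6 -> 'rV[R]_3 := fun j => crossp (u (ord_pred j)) (u j) in
  let Delta : 'I_6 -> R := fun i => dotp (v i) (crossp (v (succ6 i)) (v (succ6 (succ6 i)))) in
  Delta (inord 0) * Delta (inord 2) * Delta (inord 4)
  = Delta (inord 1) * Delta (inord 3) * Delta (inord 5).
Proof.
move=> v Delta.
pose D i := dotp (u (ord_pred i)) (crossp (u i) (u (succ6 i))).
have HD i : Delta i = D i * D (succ6 i).
  by rewrite /Delta /v !predsucc key /D predsucc.
rewrite !HD !succk //=.
Show. ring.
Qed.
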